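(* Suppose $S$ is $(K,\mu,\alpha)$-decaying and $V$ is $(J,\mu,\beta)$-decaying for some $\alpha,\beta\ge4$. Then $[S,V]$ has a local decomposition which is $(cKJ,\mu)$-decaying (i.e. $(cKJ,\mu,0)$-decaying) for some constant $c$ (independent of $L,K,J,\mu$).
   Context: Let $\Lambda=\mathbb{Z}_L\times\mathbb{Z}_L$ (periodic boundary conditions), each site carrying a finite-dimensional Hilbert space, $\mathcal{H}$ their tensor product. For $r\ge1$, $\mathcal{S}(r)$ is the set of all $r\times r$ square blocks of sites ($\mathcal{S}(L)=\{\Lambda\}$, $\mathcal{S}(r)=\emptyset$ for $r>L$). A local decomposition of an operator $V$ on $\mathcal{H}$ is a family $\{V_{r,A}\}$, $r\ge1$, $A\in\mathcal{S}(r)$, with $V_{r,A}$ supported on $A$ and $V=\sum_{r\ge1}\sum_{A\in\mathcal{S}(r)}V_{r,A}$. It is $(J,\mu,\alpha)$-decaying if $\max_{r\ge1}\max_{A\in\mathcal{S}(r)}\|V_{r,A}\|\,r^{\alpha}e^{\mu r}\le J$; an operator is called $(J,\mu,\alpha)$-decaying if it has such a local decomposition, and $(J,\mu)$-decaying means $(J,\mu,0)$-decaying. *)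

(* Defs.v *)
From HB Require Import structures.
From mathcomp Require Import all_boot all_order all_algebra.
From mathcomp Require Import complex.
From mathcomp Require Import boolp classical_sets reals.
From mathcomp.analysis Require Import sequences exp.
Set Implicit Arguments. Unset Strict Implicit. Unset Printing Implicit Defensive.
Import Order.TTheory GRing.Theory Num.Theory.
Local Open Scope ring_scope.

(* Sites of the torus Z_L x Z_L. *)
Definition site (L : nat) := ('I_L * 'I_L)%type.

(* Product basis of H = tensor over sites of C^(d x): configurations. *)
Definition config (L : nat) (d : site L -> nat) :=
  {dffun forall x : site L, 'I_(d x)}.

(* Operators on H, as matrices in the product basis, over complex numbers R[i]. *)
Definition Op (R : realType) (L : nat) (d : site L -> nat) :=
  {ffun config d * config d -> R[i]}.

Section Ops.
Variables (R : realType) (L : nat) (d : site L -> nat).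
Local Notation C := (R[i]).
Local Notation cfg := (config d).
Local Notation op := (Op R d).

Definition opmul (A B : op) : op :=
  [ffun p => \sum_(k : cfg) A (p.1, k) * B (k, p.2)].

Definition comm (A B : op) : op := opmul A B - opmul B A.

Definition apply (A : op) (v : cfg -> C) : cfg -> C :=
  fun s => \sum_(t : cfg) A (s, t) * v t.

Definition vnorm (v : cfg -> C) : R := Num.sqrt (\sum_(s : cfg) Normc.normc (v s) ^+ 2).

Definition opnorm (A : op) : R :=
  reals.sup [set vnorm (apply A v) | v in [set v | vnorm v <= 1]]%classic.

(* A is supported on the set of sites X, i.e. A = A_X (x) 1_{complement of X},
   written out in the product basis. *)
Definition supported_on (X : {set site L}) (A : op) : Prop :=
  (forall s t : cfg, (exists2 x, x \notin X & s x != t x) -> A (s, t) = 0) /\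
  (forall s t s' t' : cfg,
      (forall x, x \in X -> s x = s' x /\ t x = t' x) ->
      (forall x, x \notin X -> s x = t x /\ s' x = t' x) ->
      A (s, t) = A (s', t')).
End Ops.

(* The r x r square block with lower-left corner x (periodic b.c.). *)
Definition block (L r : nat) (x : site L) : {set site L} :=
  [set y : site L | ((y.1 + L - x.1) %% L < r)%N && ((y.2 + L - x.2) %% L < r)%N].

(* S(r): all r x r blocks; S(L) = {Lambda}, S(r) = empty for r > L. *)
Definition blocks (L r : nat) : {set {set site L}} :=
  if (r <= L)%N then [set block r x | x : site L] else finset.set0.

Section Decay.
Variables (R : realType) (L : nat) (d : site L -> nat).

Definition local_decomposition (W : nat -> {set site L} -> Op R d) (V : Op R d) : Prop :=
  (forall r A, (1 <= r)%N -> A \in blocks L r -> supported_on A (W r A)) /\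
  V = \sum_(1 <= r < L.+1) \sum_(A in blocks L r) W r A.

Definition decomp_decaying (J mu alpha : R) (W : nat -> {set site L} -> Op R d) : Prop :=
  forall r A, (1 <= r)%N -> A \in blocks L r ->
    opnorm (W r A) * powR (r%:R) alpha * expR (mu * r%:R) <= J.

Definition decaying (J mu alpha : R) (V : Op R d) : Prop :=
  exists W, local_decomposition W V /\ decomp_decaying J mu alpha W.
End Decay.

(* Main.v *)
Require Import Defs.
From HB Require Import structures.
From mathcomp Require Import all_boot all_order all_algebra.
From mathcomp Require Import complex.
From mathcomp Require Import boolp classical_sets reals.
From mathcomp.analysis Require Import sequences exp.
From mathcomp Require Import fingroup perm.
Import Order.TTheory GRing.Theory Num.Theory.
Local Open Scope ring_scope.
From mathcomp Require Import zify.
From mathcomp Require Import lra ring.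
Section Norms.
Variables (R : realType) (L : nat) (d : site L -> nat).
Local Notation C := (R[i]).
Local Notation cfg := (config d).
Local Notation op := (Op R d).
Local Notation nc := (@Normc.normc R).

Lemma nc_ge0 (z : C) : 0 <= nc z.
Proof. by case: z => a b /=; exact: sqrtr_ge0. Qed.

Lemma nc_sum (I : Type) (r : seq I) (P : pred I) (F : I -> C) :
  nc (\sum_(i <- r | P i) F i) <= \sum_(i <- r | P i) nc (F i).
Proof.
elim/big_rec2: _ => [|i x y _ Hxy]; first by rewrite Normc.normc0.
by apply: le_trans (le_normcD _ _) _; rewrite lerD2l.
Qed.

Lemma nc_realC (x : R) : 0 <= x -> nc ((x%:C)%C) = x.
Proof. by move=> x0 /=; rewrite expr0n /= addr0 sqrtr_sqr ger0_norm. Qed.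

Lemma vnorm_ge0 (v : cfg -> C) : 0 <= vnorm v.
Proof. exact: sqrtr_ge0. Qed.

Lemma vnorm_ext (u w : cfg -> C) : (forall s, u s = w s) -> vnorm u = vnorm w.
Proof. by move=> E; rewrite /vnorm; congr Num.sqrt; apply: eq_bigr => s _; rewrite E. Qed.

Lemma nc_le_vnorm (v : cfg -> C) s : nc (v s) <= vnorm v.
Proof.
rewrite /vnorm -(ger0_norm (nc_ge0 (v s))) -sqrtr_sqr ler_sqrt; last first.
  by apply: sumr_ge0 => i _; exact: sqr_ge0.
rewrite (bigD1 s) //= lerDl; apply: sumr_ge0 => i _; exact: sqr_ge0.
Qed.

Lemma vnorm_eq0 (v : cfg -> C) : vnorm v = 0 -> forall s, v s = 0.
Proof.
move=> H s; apply: Normc.eq0_normc; apply/eqP; rewrite eq_le nc_ge0 andbT.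
by rewrite -H nc_le_vnorm.
Qed.

Lemma vnormZ (c : C) (v : cfg -> C) : vnorm (fun s => c * v s) = nc c * vnorm v.
Proof.
rewrite /vnorm.
under eq_bigr do rewrite Normc.normcM exprMn.
rewrite -mulr_sumr sqrtrM ?sqr_ge0 // sqrtr_sqr ger0_norm //; exact: nc_ge0.
Qed.

Lemma cauchy_schwarz (I : finType) (a b : I -> R) :
  (\sum_i a i * b i) ^+ 2 <= (\sum_i a i ^+ 2) * (\sum_i b i ^+ 2).
Proof.
have H : 0 <= \sum_i \sum_j (a i * b j - a j * b i) ^+ 2.
  by apply: sumr_ge0 => i _; apply: sumr_ge0 => j _; exact: sqr_ge0.
have E : \sum_i \sum_j (a i * b j - a j * b i) ^+ 2 =
   (\sum_i \sum_j (a i ^+ 2 * b j ^+ 2)) + (\sum_i \sum_j (b i ^+ 2 * a j ^+ 2))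
   - 2 * (\sum_i \sum_j ((a i * b i) * (a j * b j))).
  rewrite mulr_sumr -!big_split /= -sumrB; apply: eq_bigr => i _.
  rewrite mulr_sumr -!big_split /= -sumrB; apply: eq_bigr => j _.
  ring.
have E1 : \sum_i \sum_j (a i ^+ 2 * b j ^+ 2) = (\sum_i a i ^+ 2) * (\sum_i b i ^+ 2).
  by rewrite mulr_suml; apply: eq_bigr => i _; rewrite mulr_sumr.
have E2 : \sum_i \sum_j (b i ^+ 2 * a j ^+ 2) = (\sum_i a i ^+ 2) * (\sum_i b i ^+ 2).
  by rewrite mulrC mulr_suml; apply: eq_bigr => i _; rewrite mulr_sumr.
have E3 : \sum_i \sum_j ((a i * b i) * (a j * b j)) = (\sum_i a i * b i) ^+ 2.
  by rewrite expr2 mulr_suml; apply: eq_bigr => i _; rewrite mulr_sumr.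
rewrite E E1 E2 E3 in H.
set P := _ * _ in H *; set Q := _ ^+ 2 in H *.
have : 0 <= 2 * (P - Q) by rewrite mulrBr mulr2n mulrDl mul1r; lra.
by rewrite pmulr_rge0 // subr_ge0.
Qed.

Lemma cs_sqrt (I : finType) (a b : I -> R) :
  \sum_i a i * b i <= Num.sqrt (\sum_i a i ^+ 2) * Num.sqrt (\sum_i b i ^+ 2).
Proof.
rewrite -sqrtrM; last by apply: sumr_ge0 => i _; exact: sqr_ge0.
apply: le_trans (ler_norm _) _.
rewrite -sqrtr_sqr ler_sqrt ?cauchy_schwarz //.
by apply: mulr_ge0; apply: sumr_ge0 => i _; exact: sqr_ge0.
Qed.

Lemma minkowski (u w : cfg -> C) : vnorm (fun s => u s + w s) <= vnorm u + vnorm w.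
Proof.
have Ha : 0 <= \sum_s nc (u s) ^+ 2 by apply: sumr_ge0 => i _; exact: sqr_ge0.
have Hb : 0 <= \sum_s nc (w s) ^+ 2 by apply: sumr_ge0 => i _; exact: sqr_ge0.
apply: (@le_trans _ _ (Num.sqrt (\sum_s (nc (u s) + nc (w s)) ^+ 2))).
  rewrite /vnorm ler_sqrt; last by apply: sumr_ge0 => i _; exact: sqr_ge0.
  apply: ler_sum => s _; rewrite ler_sqr ?nn_int ?nc_ge0 ?le_normcD //.
    by rewrite nnegrE nc_ge0.
  by rewrite nnegrE addr_ge0 ?nc_ge0.
rewrite -(ger0_norm (addr_ge0 (vnorm_ge0 u) (vnorm_ge0 w))) -sqrtr_sqr.
rewrite ler_sqrt ?sqr_ge0 //.
have -> : \sum_s (nc (u s) + nc (w s)) ^+ 2 =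
   \sum_s nc (u s) ^+ 2 + \sum_s nc (w s) ^+ 2 + 2 * \sum_s nc (u s) * nc (w s).
  rewrite mulr_sumr -!big_split /=; apply: eq_bigr => s _; ring.
have := cs_sqrt _ (fun s => nc (u s)) (fun s => nc (w s)).
rewrite /vnorm sqrrD !sqr_sqrtr //.
move=> H; lra.
Qed.

Lemma apply0v (A : op) : vnorm (apply A (fun=> 0)) = 0.
Proof.
rewrite (@vnorm_ext _ (fun s => 0 * 0)); last first.
  by move=> s; rewrite /apply big1 ?mulr0 // => t _; rewrite mulr0.
by rewrite vnormZ Normc.normc0 mul0r.
Qed.

Definition opset (A : op) := [set vnorm (apply A v) | v in [set v | vnorm v <= 1]]%classic.

Lemma opset_ub (A : op) : has_ubound (opset A).
Proof.
exists (Num.sqrt (\sum_s (\sum_t nc (A (s, t))) ^+ 2)).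
move=> _ [v /= Hv <-]; rewrite /vnorm ler_sqrt; last by apply: sumr_ge0 => i _; exact: sqr_ge0.
apply: ler_sum => s _; rewrite ler_sqr ?nnegrE ?nc_ge0 //; last first.
  by apply: sumr_ge0 => i _; exact: nc_ge0.
apply: le_trans (nc_sum _ _ _ _) _; apply: ler_sum => t _.
rewrite Normc.normcM -{2}(mulr1 (nc (A (s, t)))) ler_wpM2l ?nc_ge0 //.
exact: le_trans (nc_le_vnorm v t) Hv.
Qed.

Lemma opset_n0 (A : op) : (opset A !=set0)%classic.
Proof.
exists (vnorm (apply A (fun=> 0))); exists (fun=> 0) => //=.
by rewrite (@vnorm_ext _ (fun s => 0 * 0)) ?vnormZ ?Normc.normc0 ?mul0r // => s; rewrite mulr0.
Qed.

Lemma opnorm_ge0 (A : op) : 0 <= opnorm A.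
Proof.
apply: ub_le_sup; first exact: opset_ub.
exists (fun=> 0); last by rewrite apply0v.
by rewrite /= (@vnorm_ext _ (fun s => 0 * 0)) ?vnormZ ?Normc.normc0 ?mul0r // => s; rewrite mulr0.
Qed.

Lemma opnorm_unit (A : op) v : vnorm v <= 1 -> vnorm (apply A v) <= opnorm A.
Proof. by move=> Hv; apply: ub_le_sup; [exact: opset_ub | exists v]. Qed.

Lemma opnorm_leP (A : op) (M : R) :
  (forall v, vnorm v <= 1 -> vnorm (apply A v) <= M) -> opnorm A <= M.
Proof. by move=> H; apply: ge_sup; [exact: opset_n0 | move=> _ [v Hv <-]; exact: H]. Qed.

Lemma opnorm_bound (A : op) v : vnorm (apply A v) <= opnorm A * vnorm v.
Proof.
have [H0|Hn] := eqVneq (vnorm v) 0.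
  rewrite H0 mulr0 (@vnorm_ext _ (fun s => 0 * 0)) ?vnormZ ?Normc.normc0 ?mul0r //.
  by move=> s; rewrite /apply big1 // => t _; rewrite (vnorm_eq0 _ H0) mulr0.
have npos : 0 < vnorm v by rewrite lt_def Hn vnorm_ge0.
set c := (((vnorm v)^-1)%:C)%C.
have Hc : nc c = (vnorm v)^-1 by rewrite nc_realC // invr_ge0 vnorm_ge0.
have H1 : vnorm (fun s => c * v s) <= 1 by rewrite vnormZ Hc mulVf.
have := opnorm_unit A _ H1.
rewrite (@vnorm_ext _ (fun s => c * apply A v s)); last first.
  by move=> s; rewrite /apply mulr_sumr; apply: eq_bigr => t _; rewrite mulrCA.
rewrite vnormZ Hc => H.
by rewrite -ler_pdivrMr // mulrC.
Qed.

Lemma opnormD (A B : op) : opnorm (A + B) <= opnorm A + opnorm B.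
Proof.
apply: opnorm_leP => v Hv.
rewrite (@vnorm_ext _ (fun s => apply A v s + apply B v s)); last first.
  by move=> s; rewrite /apply -big_split; apply: eq_bigr => t _; rewrite ffunE mulrDl.
apply: le_trans (minkowski _ _) _.
apply: lerD.
  apply: le_trans (opnorm_bound A v) _; rewrite -{2}(mulr1 (opnorm A)).
  by rewrite ler_wpM2l ?opnorm_ge0.
apply: le_trans (opnorm_bound B v) _; rewrite -{2}(mulr1 (opnorm B)).
by rewrite ler_wpM2l ?opnorm_ge0.
Qed.

Lemma opnormN (A : op) : opnorm (- A) <= opnorm A.
Proof.
apply: opnorm_leP => v Hv.
rewrite (@vnorm_ext _ (fun s => (-1) * apply A v s)); last first.
  by move=> s; rewrite /apply mulr_sumr; apply: eq_bigr => t _; rewrite ffunE mulNr mul1r mulNr.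
rewrite vnormZ normcN Normc.normc1 mul1r; exact: opnorm_unit.
Qed.

Lemma opnormB (A B : op) : opnorm (A - B) <= opnorm A + opnorm B.
Proof. by apply: le_trans (opnormD _ _) _; rewrite lerD2l opnormN. Qed.

Lemma opnorm0 : opnorm (0 : op) = 0.
Proof.
apply/eqP; rewrite eq_le opnorm_ge0 andbT; apply: opnorm_leP => v _.
rewrite (@vnorm_ext _ (fun s => 0 * 0)) ?vnormZ ?Normc.normc0 ?mul0r //.
by move=> s; rewrite /apply big1 // => t _; rewrite ffunE mul0r.
Qed.

Lemma opnorm_sum (I : Type) (r : seq I) (P : pred I) (F : I -> op) :
  opnorm (\sum_(i <- r | P i) F i) <= \sum_(i <- r | P i) opnorm (F i).
Proof.
elim/big_rec2: _ => [|i x y _ Hxy]; first by rewrite opnorm0.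
by apply: le_trans (opnormD _ _) _; rewrite lerD2l.
Qed.

Lemma apply_mul (A B : op) v s : apply (opmul A B) v s = apply A (apply B v) s.
Proof.
rewrite /apply /opmul.
under eq_bigr do rewrite ffunE /= mulr_suml.
rewrite exchange_big /=; apply: eq_bigr => k _; rewrite mulr_sumr.
by apply: eq_bigr => t _; rewrite mulrA.
Qed.

Lemma opnormM (A B : op) : opnorm (opmul A B) <= opnorm A * opnorm B.
Proof.
apply: opnorm_leP => v Hv.
rewrite (@vnorm_ext _ (apply A (apply B v))); last by move=> s; rewrite apply_mul.
apply: le_trans (opnorm_bound A _) _; rewrite ler_wpM2l ?opnorm_ge0 //.
apply: le_trans (opnorm_bound B _) _; rewrite -{2}(mulr1 (opnorm B)).
by rewrite ler_wpM2l ?opnorm_ge0.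
Qed.

Lemma opnorm_comm (A B : op) : opnorm (comm A B) <= 2 * (opnorm A * opnorm B).
Proof.
apply: le_trans (opnormB _ _) _.
rewrite mulr2n mulrDl mul1r; apply: lerD; first exact: opnormM.
by rewrite mulrC; exact: opnormM.
Qed.

End Norms.
Arguments opnorm_ge0 {R L d}.
Arguments opnorm_sum {R L d I}.
Arguments opnorm_comm {R L d}.
Arguments opnorm0 {R L d}.
Section Supp.
Variables (R : realType) (L : nat) (d : site L -> nat).
Local Notation C := (R[i]).
Local Notation cfg := (config d).
Local Notation op := (Op R d).

Lemma opB (A B : op) p : (A - B) p = A p - B p.
Proof. by rewrite !ffunE. Qed.

Lemma supp1 (X : {set site L}) (A : op) (s t : cfg) x :
  supported_on X A -> x \notin X -> s x != t x -> A (s, t) = 0.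
Proof. by case=> H1 _ Hx Hst; apply: H1; exists x. Qed.
Arguments supp1 {X A s t x}.

Lemma suppP (X : {set site L}) (A : op) (s t s' t' : cfg) : supported_on X A ->
  (forall x, x \in X -> s x = s' x /\ t x = t' x) ->
  (forall x, x \notin X -> (s x == t x) = (s' x == t' x)) ->
  A (s, t) = A (s', t').
Proof.
move=> HA HX HnX.
case: (boolP [exists x, (x \notin X) && (s x != t x)]) => [/existsP [x /andP [Hx Hst]]|/existsPn Hn].
  rewrite (supp1 HA Hx Hst) (supp1 (s := s') (t := t') HA Hx) //.
  by rewrite -HnX.
case: HA => _ H2; apply: H2 => // x Hx.
have := Hn x; rewrite Hx /= negbK => /eqP E; split => //.
by apply/eqP; rewrite -(HnX x Hx) E.
Qed.
Arguments suppP {X A s t s' t'}.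

Lemma supp_mono (X Y : {set site L}) (A : op) :
  supported_on X A -> X \subset Y -> supported_on Y A.
Proof.
move=> HA sXY; split.
  move=> s t [x Hx Hst]; apply: (supp1 HA _ Hst).
  by apply/negP => HX; move/negP: Hx; apply; exact: (fintype.subsetP sXY).
move=> s t s' t' H1 H2; apply: (suppP HA).
  by move=> x Hx; apply: H1; apply: (fintype.subsetP sXY).
move=> x Hx; case: (boolP (x \in Y)) => Hy.
  by have [-> ->] := H1 x Hy.
by have [-> ->] := H2 x Hy; rewrite !eqxx.
Qed.

Lemma supp0 (X : {set site L}) : supported_on X (0 : op).
Proof. by split => *; rewrite !ffunE. Qed.

Lemma suppD (X : {set site L}) (A B : op) :
  supported_on X A -> supported_on X B -> supported_on X (A + B).
Proof.
move=> HA HB; split.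
  by move=> s t [x Hx Hst]; rewrite ffunE (supp1 HA Hx Hst) (supp1 HB Hx Hst) addr0.
move=> s t s' t' H1 H2; rewrite !ffunE; case: HA => _ HA2; case: HB => _ HB2.
by congr (_ + _); [apply: HA2 | apply: HB2].
Qed.

Lemma suppN (X : {set site L}) (A : op) :
  supported_on X A -> supported_on X (- A).
Proof.
move=> HA; split.
  by move=> s t [x Hx Hst]; rewrite ffunE (supp1 HA Hx Hst) oppr0.
move=> s t s' t' H1 H2; rewrite !ffunE; case: HA => _ HA2.
by congr (- _); apply: HA2.
Qed.

Lemma suppB (X : {set site L}) (A B : op) :
  supported_on X A -> supported_on X B -> supported_on X (A - B).
Proof. by move=> HA HB; apply: suppD => //; apply: suppN. Qed.

Lemma supp_sum (X : {set site L}) (I : Type) (r : seq I) (P : pred I) (F : I -> op) :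
  (forall i, P i -> supported_on X (F i)) -> supported_on X (\sum_(i <- r | P i) F i).
Proof.
move=> H; elim/big_ind: _ => //; first exact: supp0.
by move=> x y; apply: suppD.
Qed.

Definition tau (Z : {set site L}) (s s' : cfg) (k : cfg) : cfg :=
  [ffun x => if x \in Z then k x else tperm (s x) (s' x) (k x)].

Lemma tauK Z s s' : involutive (tau Z s s').
Proof.
move=> k; apply/ffunP => x; rewrite !ffunE.
by case: (x \in Z) => //; rewrite tpermK.
Qed.

Lemma supp_mul (X Y : {set site L}) (A B : op) :
  supported_on X A -> supported_on Y B -> supported_on (X :|: Y) (opmul A B).
Proof.
move=> HA HB; split.
  move=> s t [x Hx Hst]; rewrite ffunE /= big1 // => k _.
  move: Hx; rewrite finset.in_setU negb_or => /andP [HxX HxY].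
  case: (eqVneq (k x) (s x)) => Hk.
    by rewrite (supp1 HB HxY) ?mulr0 // Hk.
  by rewrite (supp1 HA HxX) ?mul0r // eq_sym.
move=> s t s' t' H1 H2; rewrite !ffunE /=.
set Z := X :|: Y.
rewrite [RHS](reindex_inj (can_inj (tauK Z s s'))) /=.
apply: eq_bigr => k _.
have XZ : forall x, x \in X -> x \in Z by move=> x Hx; rewrite finset.in_setU Hx.
have YZ : forall x, x \in Y -> x \in Z by move=> x Hx; rewrite finset.in_setU Hx orbT.
case: (boolP [exists x, (x \notin Z) && (k x != s x)]) => [/existsP [x /andP [Hx Hk]]|/existsPn Hn].
  have HxX : x \notin X by apply/negP => HX; move/negP: Hx; apply; exact: XZ.
  rewrite (supp1 HA HxX (s := s) (t := k)) ?mul0r; last by rewrite eq_sym.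
  rewrite (supp1 HA HxX (s := s') (t := tau Z s s' k)) ?mul0r //.
  rewrite ffunE (negbTE Hx).
  apply: contra Hk => /eqP E; apply/eqP; apply: (@perm_inj _ (tperm (s x) (s' x))).
  by rewrite tpermL -E.
have kZ : forall x, x \notin Z -> k x = s x.
  by move=> x Hx; have := Hn x; rewrite Hx /= negbK => /eqP.
have tauZ : forall x, x \in Z -> tau Z s s' k x = k x by move=> x Hx; rewrite ffunE Hx.
have tauNZ : forall x, x \notin Z -> tau Z s s' k x = s' x.
  by move=> x Hx; rewrite ffunE (negbTE Hx) kZ // tpermL.
congr (_ * _).
  apply: (suppP HA).
    by move=> x Hx; split; [have [] := H1 x (XZ x Hx) | rewrite tauZ ?XZ].
  move=> x Hx; case: (boolP (x \in Z)) => Hz.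
    by rewrite tauZ //; have [<- _] := H1 x Hz.
  by rewrite tauNZ // kZ // !eqxx.
apply: (suppP HB).
  by move=> x Hx; split; [rewrite tauZ ?YZ | have [] := H1 x (YZ x Hx)].
move=> x Hx; case: (boolP (x \in Z)) => Hz.
  by rewrite tauZ //; have [_ <-] := H1 x Hz.
have [E1 E2] := H2 x Hz.
by rewrite tauNZ // kZ // E1 E2 !eqxx.
Qed.

Lemma supp_comm (X Y : {set site L}) (A B : op) :
  supported_on X A -> supported_on Y B -> supported_on (X :|: Y) (comm A B).
Proof.
move=> HA HB; apply: suppB; first exact: supp_mul.
by rewrite finset.setUC; apply: supp_mul.
Qed.

Definition mix (X : {set site L}) (s t : cfg) : cfg :=
  [ffun x => if x \in X then s x else t x].

Lemma opmul_single (X Y : {set site L}) (A B : op) (s t : cfg) :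
  supported_on X A -> supported_on Y B -> [disjoint X & Y] ->
  opmul A B (s, t) = A (s, mix X t s) * B (mix X t s, t).
Proof.
move=> HA HB dXY; rewrite ffunE /= (bigD1 (mix X t s)) //= big1 ?addr0 // => k Hk.
case: (boolP [forall x, k x == mix X t s x]) => [/forallP H|/forallPn [x Hx]].
  move: Hk; have -> : k = mix X t s by apply/ffunP => x; apply/eqP.
  by rewrite eqxx.
move: Hx; rewrite ffunE; case: (boolP (x \in X)) => HxX Hx.
  have HxY : x \notin Y by rewrite (disjointFr dXY HxX).
  by rewrite (supp1 HB HxY Hx) mulr0.
by rewrite (supp1 HA HxX (t := k)) ?mul0r // eq_sym.
Qed.
Arguments opmul_single {X Y A B s t}.

Lemma comm_disj (X Y : {set site L}) (A B : op) :
  supported_on X A -> supported_on Y B -> [disjoint X & Y] -> comm A B = 0.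
Proof.
move=> HA HB dXY; apply/ffunP => [[s t]]; rewrite /comm opB [RHS]ffunE.
have dYX : [disjoint Y & X] by rewrite disjoint_sym.
rewrite (opmul_single (s := s) (t := t) HA HB dXY) (opmul_single (s := s) (t := t) HB HA dYX).
apply/eqP; rewrite subr_eq0; apply/eqP.
set k0 := mix X t s; set k1 := mix Y t s.
have nXY : forall x, x \in X -> x \notin Y by move=> x Hx; rewrite (disjointFr dXY Hx).
have nYX : forall x, x \in Y -> x \notin X by move=> x Hx; apply/negP => HX; move: (nXY x HX); rewrite Hx.
case: (boolP [exists x, [&& x \notin X, x \notin Y & s x != t x]]) => [/existsP [x /and3P [HX HY Hst]]|/existsPn Hn].
  rewrite (supp1 HB (s := k0) (t := t) HY) ?mulr0; last by rewrite /k0 ffunE (negbTE HX).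
  by rewrite (supp1 HA (s := k1) (t := t) HX) ?mulr0 // /k1 ffunE (negbTE HY).
have st : forall x, x \notin X -> x \notin Y -> s x = t x.
  by move=> x H1 H2; have := Hn x; rewrite H1 H2 /= negbK => /eqP.
rewrite mulrC; congr (_ * _).
  apply: (suppP HB).
    move=> x Hx; rewrite /k0 /k1 !ffunE Hx (negbTE (nYX x Hx)); split => //.
  move=> x Hx; rewrite /k0 /k1 !ffunE (negbTE Hx) eqxx.
  by case: (boolP (x \in X)) => HxX; rewrite ?eqxx // st // eqxx.
apply: (suppP HA).
  by move=> x Hx; rewrite /k0 /k1 !ffunE Hx (negbTE (nXY x Hx)).
move=> x Hx; rewrite /k0 /k1 !ffunE (negbTE Hx) eqxx.
by case: (boolP (x \in Y)) => HxY; rewrite ?eqxx // st // eqxx.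
Qed.

End Supp.
Arguments supp_mono {R L d X Y A}.
Arguments supp_comm {R L d X Y A B}.
Arguments comm_disj {R L d X Y A B}.
Arguments supp_mul {R L d X Y A B}.


Section Geo.
Variable (L : nat).

Definition offn (a b : nat) := ((a + L - b) %% L)%N.

Lemma offE (a b : nat) : (a < L)%N -> (b < L)%N ->
  offn a b = if (b <= a)%N then (a - b)%N else (a + L - b)%N.
Proof.
move=> aL bL; rewrite /offn; case: leqP => ba.
  have -> : (a + L - b = (a - b) + L)%N by lia.
  by rewrite modnDr modn_small //; lia.
by rewrite modn_small //; lia.
Qed.

Lemma off_lt a b : (a < L)%N -> (b < L)%N -> (offn a b < L)%N.
Proof. by move=> aL bL; rewrite offE //; case: (leqP b a) => ?; lia. Qed.

Lemma off_tri p y x : (p < L)%N -> (y < L)%N -> (x < L)%N ->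
  (offn p x <= offn p y + offn y x)%N.
Proof.
move=> pL yL xL; rewrite !offE //.
by case: (leqP x p); case: (leqP y p); case: (leqP x y) => *; lia.
Qed.

Arguments off_tri {p y x}.

Lemma off_inter q a b r r' : (q < L)%N -> (a < L)%N -> (b < L)%N ->
  (offn q a < r)%N -> (offn q b < r')%N -> (offn b a < r)%N || (offn a b < r')%N.
Proof.
move=> qL aL bL; rewrite !offE //.
by case: (leqP a q); case: (leqP b q); case: (leqP a b); case: (leqP b a) => *; lia.
Qed.

Arguments off_inter {q a b r r'}.

Lemma off_self a : (a < L)%N -> offn a a = 0%N.
Proof. by move=> aL; rewrite offE // leqnn subnn. Qed.

Lemma off_inj a a' b : (a < L)%N -> (a' < L)%N -> (b < L)%N ->
  offn a b = offn a' b -> a = a'.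
Proof.
move=> aL a'L bL; rewrite !offE //.
by case: (leqP b a); case: (leqP b a') => *; lia.
Qed.

Lemma off_cover a b p r r' : (a < L)%N -> (b < L)%N -> (p < L)%N ->
  (1 <= r)%N -> (1 <= r')%N ->
  (offn b a < r)%N || (offn a b < r')%N ->
  (offn p a < r)%N || (offn p b < r')%N ->
  (offn p (if (offn b a < r)%N then a else b) < r + r' - 1)%N.
Proof.
move=> aL bL pL r1 r'1 Hab Hp.
case: ifP => Hba.
  case/orP: Hp => Hp; first lia.
  have := off_tri pL bL aL; lia.
move: Hab; rewrite Hba /= => Hab.
case/orP: Hp => Hp; last lia.
have := off_tri pL aL bL; lia.
Qed.

Arguments off_cover {a b p r r'}.

Lemma mem_block r (x y : site L) :
  (y \in block r x) = (offn y.1 x.1 < r)%N && (offn y.2 x.2 < r)%N.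
Proof. by rewrite /block inE /offn. Qed.

Lemma block_self r (x : site L) : (0 < r)%N -> x \in block r x.
Proof. by move=> r0; rewrite mem_block !off_self ?ltn_ord ?r0. Qed.

Lemma blocks_mem r A : (r <= L)%N -> (A \in blocks L r) = (A \in [set block r x | x : site L]).
Proof. by move=> rL; rewrite /blocks rL. Qed.

Lemma block_full (x : site L) : block L x = [set: site L].
Proof.
apply/setP => y; rewrite mem_block inE !off_lt //.
Qed.

Lemma blockLL (x : site L) : [set: site L] \in blocks L L.
Proof. by rewrite blocks_mem // -(block_full x); apply/imsetP; exists x. Qed.

Definition zc r (a b : 'I_L) : 'I_L := if (offn b a < r)%N then a else b.

Lemma cover r r' (x y : site L) : (1 <= r)%N -> (1 <= r')%N ->
  ~~ [disjoint block r x & block r' y] ->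
  (block r x :|: block r' y) \subset block (r + r' - 1) (zc r x.1 y.1, zc r x.2 y.2).
Proof.
move=> r1 r'1 /pred0Pn [q /andP [Hqx Hqy]].
have Hqx' : q \in block r x := Hqx.
have Hqy' : q \in block r' y := Hqy.
move: Hqx' Hqy'; rewrite !mem_block => /andP [qx1 qx2] /andP [qy1 qy2].
have I1 := off_inter (ltn_ord q.1) (ltn_ord x.1) (ltn_ord y.1) qx1 qy1.
have I2 := off_inter (ltn_ord q.2) (ltn_ord x.2) (ltn_ord y.2) qx2 qy2.
apply/fintype.subsetP => p; rewrite finset.in_setU !mem_block /= /zc.
move=> Hp.
have Hp1 : (offn p.1 x.1 < r)%N || (offn p.1 y.1 < r')%N.
  by case/orP: Hp => /andP [-> _] //; rewrite orbT.
have Hp2 : (offn p.2 x.2 < r)%N || (offn p.2 y.2 < r')%N.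
  by case/orP: Hp => /andP [_ ->] //; rewrite orbT.
rewrite (fun_if val) (fun_if (fun b : 'I_L => val b)).
rewrite -!(fun_if (fun b : 'I_L => val b)).
apply/andP; split.
  by have := off_cover (ltn_ord x.1) (ltn_ord y.1) (ltn_ord p.1) r1 r'1 I1 Hp1; case: ifP.
by have := off_cover (ltn_ord x.2) (ltn_ord y.2) (ltn_ord p.2) r1 r'1 I2 Hp2; case: ifP.
Qed.

End Geo.
Section Card.
Variable (L : nat).

Lemma card_block t (z : site L) : (t <= L)%N -> (#|block t z| <= t * t)%N.
Proof.
move=> tL.
have L0 : (0 < L)%N by apply: leq_ltn_trans (leq0n _) (ltn_ord z.1).
pose offo (a b : 'I_L) : 'I_L := Ordinal (ltn_pmod (a + L - b) L0).
pose f (q : site L) := (offo q.1 z.1, offo q.2 z.2).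
have finj : injective f.
  move=> [q1 q2] [q1' q2'] [E1 E2].
  have e1 := @off_inj L _ _ _ (ltn_ord q1) (ltn_ord q1') (ltn_ord z.1) E1.
  have e2 := @off_inj L _ _ _ (ltn_ord q2) (ltn_ord q2') (ltn_ord z.2) E2.
  by congr pair; apply: val_inj.
rewrite -(card_imset _ finj).
pose S := [set i : 'I_L | (i < t)%N].
have sub : f @: block t z \subset finset.setX S S.
  apply/fintype.subsetP => _ /imsetP [q Hq ->].
  move: Hq; rewrite mem_block => /andP [h1 h2].
  by rewrite finset.in_setX !inE; apply/andP; split; [exact: h1 | exact: h2].
apply: leq_trans (subset_leq_card sub) _.
rewrite cardsX leq_mul //.
  have subS : S \subset [set widen_ord tL i | i : 'I_t].
    apply/fintype.subsetP => i; rewrite inE => it; apply/imsetP.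
    by exists (Ordinal it) => //; apply: val_inj.
  by apply: leq_trans (subset_leq_card subS) _; rewrite (leq_trans (leq_imset_card _ _)) // card_ord.
have subS : S \subset [set widen_ord tL i | i : 'I_t].
  apply/fintype.subsetP => i; rewrite inE => it; apply/imsetP.
  by exists (Ordinal it) => //; apply: val_inj.
by apply: leq_trans (subset_leq_card subS) _; rewrite (leq_trans (leq_imset_card _ _)) // card_ord.
Qed.

Lemma card_sub_blocks r (C : {set site L}) : (1 <= r)%N -> (r <= L)%N ->
  (#|[set A in blocks L r | A \subset C]| <= #|C|)%N.
Proof.
move=> r1 rL.
have sub : [set A in blocks L r | A \subset C] \subset [set block r x | x in C].
  apply/fintype.subsetP => A; rewrite inE => /andP [].
  rewrite blocks_mem // => /imsetP [x _ ->] HC.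
  apply/imsetP; exists x => //.
  by apply: (fintype.subsetP HC); apply: block_self.
by apply: leq_trans (subset_leq_card sub) _; exact: leq_imset_card.
Qed.

End Card.
Lemma cnt_ge (a n : nat) : (\sum_(0 <= i < n) nat_of_bool (a <= i)%N = n - a)%N.
Proof.
elim: n => [|n IH]; first by rewrite big_geq.
rewrite big_nat_recr //= IH; case: leqP => H /=; lia.
Qed.

Lemma cnt_eq (k n : nat) : (\sum_(0 <= i < n) nat_of_bool (i == k) = nat_of_bool (k < n))%N.
Proof.
elim: n => [|n IH]; first by rewrite big_geq.
rewrite big_nat_recr //= IH; case: (ltngtP k n) => H /=.
- by rewrite ltnS ltnW.
- by rewrite ltnS leqNgt H.
- by rewrite H ltnS leqnn.
Qed.

Lemma sum_from1 (n : nat) (F : nat -> nat) :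
  (\sum_(1 <= i < n.+1) F i <= \sum_(0 <= i < n.+1) F i)%N.
Proof. by rewrite (big_ltn (m := 0)) // leq_addl. Qed.

Lemma cnt_main (r t L : nat) : (1 <= r)%N ->
  (\sum_(1 <= r' < L.+1) nat_of_bool (minn (r + r' - 1) L == t) <= r + 1)%N.
Proof.
move=> r1.
apply: (@leq_trans (\sum_(1 <= r' < L.+1)
   (nat_of_bool (L.+1 - r <= r')%N + nat_of_bool (r' == t.+1 - r)))).
  rewrite big_nat_cond [X in (_ <= X)%N]big_nat_cond.
  apply: leq_sum => i /andP [/andP [i1 _] _].
  case: eqP => //= E.
  case: (leqP (L.+1 - r) i) => H1 //=.
  case: eqP => H2 //=; exfalso; lia.
rewrite big_split /=.
apply: leq_add.
  by apply: leq_trans (sum_from1 _ _) _; rewrite cnt_ge; lia.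
apply: leq_trans (sum_from1 _ _) _; rewrite cnt_eq; by case: (_ < _)%N.
Qed.

Section Num.
Variable R : realType.

Definition aw (r : nat) : R := ((r%:R : R) ^+ 4)^-1.

Lemma aw_ge0 r : 0 <= aw r.
Proof. by rewrite /aw invr_ge0 exprn_ge0. Qed.

Lemma step_ineq (x : R) : 1 <= x ->
  (x + 1) * (x ^+ 4)^-1 <= 4 * x^-1 - 4 * (x + 1)^-1.
Proof.
move=> x1.
have x0 : 0 < x by lra.
have x10 : 0 < x + 1 by lra.
have x40 : 0 < x ^+ 4 by rewrite exprn_gt0.
rewrite -subr_ge0.
have -> : 4 * x^-1 - 4 * (x + 1)^-1 - (x + 1) * (x ^+ 4)^-1 =
   (4 * x ^+ 3 - (x + 1) ^+ 2) / (x ^+ 4 * (x + 1)).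
  by field; rewrite !lt0r_neq0.
apply: divr_ge0; last by rewrite mulr_ge0 // ltW.
have h3 : 1 <= x ^+ 3 by rewrite exprn_ege1.
have h2 : x ^+ 3 = x * x * x by rewrite !exprS expr0 mulr1 mulrA.
rewrite h2; nra.
Qed.

Lemma sum_aw (n : nat) :
  \sum_(1 <= r < n.+1) aw r * (r.+1)%:R <= 4 - 4 * (n.+1%:R)^-1.
Proof.
elim: n => [|n IH]; first by rewrite big_geq // divr1 subrr.
rewrite big_nat_recr //=.
have H := step_ineq ((n.+1)%:R : R).
rewrite ler1n in H; have {}H := H isT.
move: IH H; rewrite /aw -[(n.+2)%:R]natr1.
set x := (n.+1)%:R; set S := \sum_(_ <= _ < _) _.
move=> IH H.
rewrite [_^-1 * _]mulrC.
move: IH H; set a := (x + 1) / _; set b := 4 / (x + 1); set c := 4 / x.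
move=> IH H; lra.
Qed.

End Num.
Section Num2.
Variable R : realType.

Lemma pow4_ineq (x y : R) : 0 <= x -> 0 <= y -> (x + y) ^+ 4 <= 8 * (x ^+ 4 + y ^+ 4).
Proof.
move=> x0 y0.
have h1 : (x + y) ^+ 2 <= 2 * (x ^+ 2 + y ^+ 2).
  have := sqr_ge0 (x - y); rewrite !expr2; nra.
have h2 : 0 <= (x + y) ^+ 2 by exact: sqr_ge0.
have h3 : (x + y) ^+ 4 <= (2 * (x ^+ 2 + y ^+ 2)) ^+ 2.
  rewrite (_ : 4%N = (2 * 2)%N) // exprM; apply: lerXn2r => //.
  by rewrite nnegrE mulr_ge0 // addr_ge0 // sqr_ge0.
apply: le_trans h3 _.
have := sqr_ge0 (x ^+ 2 - y ^+ 2).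
rewrite (_ : 4%N = (2 * 2)%N) // !exprM.
set u := x ^+ 2; set v := y ^+ 2.
rewrite !expr2; nra.
Qed.

Lemma pair_ineq (x y : R) : 1 <= x -> 1 <= y ->
  (x + y) ^+ 4 * ((x ^+ 4)^-1 * (y ^+ 4)^-1) <= 8 * ((x ^+ 4)^-1 + (y ^+ 4)^-1).
Proof.
move=> x1 y1.
have x4 : 0 < x ^+ 4 by rewrite exprn_gt0 //; lra.
have y4 : 0 < y ^+ 4 by rewrite exprn_gt0 //; lra.
have -> : 8 * ((x ^+ 4)^-1 + (y ^+ 4)^-1) = 8 * (x ^+ 4 + y ^+ 4) * ((x ^+ 4)^-1 * (y ^+ 4)^-1).
  have x0 : 0 < x by lra.
  have y0 : 0 < y by lra.
  by field; rewrite ?lt0r_neq0 ?x0 ?y0 ?x4 ?y4.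
rewrite ler_pM2r; last by rewrite mulr_gt0 // invr_gt0.
by apply: pow4_ineq; lra.
Qed.

Lemma num_main (L t : nat) : (1 <= t)%N ->
  (t%:R : R) ^+ 4 * (\sum_(1 <= r < L.+1) \sum_(1 <= r' < L.+1)
     (if minn (r + r' - 1) L == t then aw R r * aw R r' else 0)) <= 64.
Proof.
move=> t1.
set c := fun r r' => minn (r + r' - 1) L == t.
have csym : forall r r', c r r' = c r' r by move=> r r'; rewrite /c addnC.
apply: (@le_trans _ _ (\sum_(1 <= r < L.+1) \sum_(1 <= r' < L.+1)
     ((if c r r' then 8 * aw R r else 0) + (if c r r' then 8 * aw R r' else 0)))).
  rewrite mulr_sumr big_nat_cond [X in _ <= X]big_nat_cond.
  apply: ler_sum => r /andP [/andP [r1 _] _].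
  rewrite mulr_sumr big_nat_cond [X in _ <= X]big_nat_cond.
  apply: ler_sum => r' /andP [/andP [r'1 _] _].
  rewrite /c; case: eqP => E; last by rewrite mulr0 addr0.
  have tr : (t <= r + r')%N by rewrite -E; lia.
  rewrite -mulrDr /aw.
  apply: (@le_trans _ _ (((r + r')%:R : R) ^+ 4 * ((r%:R ^+ 4)^-1 * (r'%:R ^+ 4)^-1))).
    rewrite ler_wpM2r //; first by rewrite mulr_ge0 // invr_ge0 exprn_ge0.
    by apply: lerXn2r; rewrite ?nnegrE // ler_nat.
  by rewrite natrD; apply: pair_ineq; rewrite ler1n.
under eq_bigr do rewrite big_split.
rewrite big_split /=.
have key : \sum_(1 <= r < L.+1) \sum_(1 <= r' < L.+1) (if c r r' then 8 * aw R r else 0) <= 32.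
  apply: (@le_trans _ _ (8 * \sum_(1 <= r < L.+1) aw R r * (r.+1)%:R)); last first.
    have h2 := sum_aw R L.
    have h1 : 0 <= 4 * ((L.+1)%:R : R)^-1 by rewrite mulr_ge0 // invr_ge0 ler0n.
    move: h1 h2; set w := 4 * _^-1; set S := \sum_(_ <= _ < _) _; move=> h1 h2; lra.
  rewrite mulr_sumr big_nat_cond [X in _ <= X]big_nat_cond.
  apply: ler_sum => r /andP [/andP [r1 _] _].
  have E : \sum_(1 <= r' < L.+1) (if c r r' then 8 * aw R r else 0) =
      8 * aw R r * (\sum_(1 <= r' < L.+1) nat_of_bool (c r r'))%:R.
    rewrite natr_sum mulr_sumr; apply: eq_bigr => r' _.
    by case: (c r r'); rewrite ?mulr1 ?mulr0.
  rewrite E -mulrA ler_wpM2l //; rewrite ler_wpM2l ?aw_ge0 // ler_nat.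
  by apply: leq_trans (@cnt_main r t L r1) _; rewrite addn1.
have key2 : \sum_(1 <= r < L.+1) \sum_(1 <= r' < L.+1) (if c r r' then 8 * aw R r' else 0) <= 32.
  rewrite exchange_big /=.
  under eq_bigr do under eq_bigr do rewrite csym.
  exact: key.
lra.
Qed.

End Num2.
Section OpAlg.
Variables (R : realType) (L : nat) (d : site L -> nat).
Local Notation op := (Op R d).

Lemma opmulDl (A B C : op) : opmul (A + B) C = opmul A C + opmul B C.
Proof.
apply/ffunP => p; rewrite [LHS]ffunE [in RHS]ffunE [opmul A C p]ffunE [opmul B C p]ffunE.
by rewrite -big_split; apply: eq_bigr => k _; rewrite ffunE mulrDl.
Qed.

Lemma opmulDr (A B C : op) : opmul A (B + C) = opmul A B + opmul A C.
Proof.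
apply/ffunP => p; rewrite [LHS]ffunE [in RHS]ffunE [opmul A B p]ffunE [opmul A C p]ffunE.
by rewrite -big_split; apply: eq_bigr => k _; rewrite ffunE mulrDr.
Qed.

Lemma opmul0l (C : op) : opmul 0 C = 0.
Proof. by apply/ffunP => p; rewrite !ffunE big1 // => k _; rewrite ffunE mul0r. Qed.

Lemma opmul0r (C : op) : opmul C 0 = 0.
Proof. by apply/ffunP => p; rewrite !ffunE big1 // => k _; rewrite ffunE mulr0. Qed.

Lemma opmul_suml (I : Type) (r : seq I) (P : pred I) (F : I -> op) (B : op) :
  opmul (\sum_(i <- r | P i) F i) B = \sum_(i <- r | P i) opmul (F i) B.
Proof. exact: (big_morph (fun A => opmul A B) (fun A C => opmulDl A C B) (opmul0l B)). Qed.

Lemma opmul_sumr (I : Type) (r : seq I) (P : pred I) (F : I -> op) (B : op) :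
  opmul B (\sum_(i <- r | P i) F i) = \sum_(i <- r | P i) opmul B (F i).
Proof. exact: (big_morph (fun A => opmul B A) (fun A C => opmulDr B A C) (opmul0r B)). Qed.

End OpAlg.

Lemma pull (V : zmodType) (I1 I2 I3 : Type) (r1 : seq I1) (r2 : seq I2) (r3 : seq I3)
  (F : I1 -> I2 -> I3 -> V) :
  \sum_(i <- r1) \sum_(j <- r2) \sum_(k <- r3) F i j k =
  \sum_(k <- r3) \sum_(i <- r1) \sum_(j <- r2) F i j k.
Proof. under eq_bigr do rewrite exchange_big. by rewrite exchange_big. Qed.

Lemma sum_nat_pick (V : zmodType) (m n k : nat) (F : nat -> V) : (m <= k < n)%N ->
  \sum_(m <= i < n) (if i == k then F i else 0) = F k.
Proof.
move=> Hk.
rewrite (bigD1_seq k) ?mem_index_iota ?iota_uniq //= eqxx big1_seq ?addr0 //.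
by move=> i /andP [Hik _]; rewrite (negbTE Hik).
Qed.
Section Main.
Variables (R : realType) (L : nat) (d : site L -> nat).
Local Notation op := (Op R d).
Variables (K J mu : R) (SW VW : nat -> {set site L} -> op).
Hypothesis L0 : (0 < L)%N.
Hypothesis mu0 : 0 <= mu.
Hypothesis SWloc : forall r A, (1 <= r)%N -> A \in blocks L r -> supported_on A (SW r A).
Hypothesis VWloc : forall r A, (1 <= r)%N -> A \in blocks L r -> supported_on A (VW r A).
Hypothesis Kb : forall r A, (1 <= r)%N -> A \in blocks L r ->
  opnorm (SW r A) <= K * aw R r * expR (- (mu * r%:R)).
Hypothesis Jb : forall r A, (1 <= r)%N -> A \in blocks L r ->
  opnorm (VW r A) <= J * aw R r * expR (- (mu * r%:R)).
Hypothesis K0 : 0 <= K.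
Hypothesis J0 : 0 <= J.

Definition Tm r A r' B := comm (SW r A) (VW r' B).
Definition tt r r' := minn (r + r' - 1) L.
Definition pk t (A B : {set site L}) := [pick C in blocks L t | A :|: B \subset C].
Definition sel t C r A r' B : bool :=
  [&& A \in blocks L r, B \in blocks L r', tt r r' == t, ~~ [disjoint A & B] & pk t A B == Some C].
Definition G t C r A r' B : op := if sel t C r A r' B then Tm r A r' B else 0.
Definition W t C := \sum_(1 <= r < L.+1) \sum_(A : {set site L}) \sum_(1 <= r' < L.+1)
   \sum_(B : {set site L}) G t C r A r' B.

Lemma pk_some t A B C : pk t A B = Some C -> C \in blocks L t /\ A :|: B \subset C.
Proof. by rewrite /pk; case: pickP => // C' /andP [h1 h2] [<-]. Qed.

Lemma W_supp t C : supported_on C (W t C).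
Proof.
rewrite /W big_nat_cond; apply: supp_sum => r /andP [/andP [r1 _] _].
apply: supp_sum => A _.
rewrite big_nat_cond; apply: supp_sum => r' /andP [/andP [r'1 _] _].
apply: supp_sum => B _.
rewrite /G /sel; case: (boolP [&& _, _, _, _ & _]); last by move=> _; exact: supp0.
move=> /and5P [hA hB _ _ /eqP hpk].
have [_ sub] := pk_some _ _ _ _ hpk.
apply: supp_mono sub; apply: supp_comm; [exact: SWloc | exact: VWloc].
Qed.

Lemma exists_cover r r' A B : (1 <= r <= L)%N -> (1 <= r' <= L)%N ->
  A \in blocks L r -> B \in blocks L r' -> ~~ [disjoint A & B] ->
  exists2 C0, C0 \in blocks L (tt r r') & A :|: B \subset C0.
Proof.
move=> /andP [r1 rL] /andP [r'1 r'L].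
rewrite blocks_mem // => /imsetP [x _ ->]; rewrite blocks_mem // => /imsetP [y _ ->] Hd.
rewrite /tt; case: (leqP L (r + r' - 1)) => H.
  exists [set: site L]; [exact: blockLL x | exact: finset.subsetT].

exists (block (r + r' - 1) (zc L r x.1 y.1, zc L r x.2 y.2)); last exact: cover.
by rewrite blocks_mem; [apply/imsetP; eexists | lia].
Qed.

Arguments exists_cover {r r' A B}.

Lemma sum_G r A r' B : (1 <= r <= L)%N -> (1 <= r' <= L)%N ->
  \sum_(1 <= t < L.+1) \sum_(C : {set site L}) G t C r A r' B =
  if (A \in blocks L r) && (B \in blocks L r') then Tm r A r' B else 0.
Proof.
move=> hr hr'.
case: (boolP ((A \in blocks L r) && (B \in blocks L r'))) => [/andP [hA hB] | hAB]; last first.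
  rewrite big1 // => t _; rewrite big1 // => C _; rewrite /G /sel; move: hAB.
  by case: (A \in blocks L r); case: (B \in blocks L r').
have r1 : (1 <= r)%N by case/andP: hr.
have r'1 : (1 <= r')%N by case/andP: hr'.
case: (boolP [disjoint A & B]) => Hd.
  have -> : Tm r A r' B = 0 by rewrite /Tm; exact: (comm_disj (SWloc _ _ r1 hA) (VWloc _ _ r'1 hB) Hd).
  by rewrite big1 // => t _; rewrite big1 // => C _; rewrite /G /sel Hd /= !andbF.
have [C0 HC0 HsubC0] := exists_cover hr hr' hA hB Hd.
have [C1 HC1] : exists C1, pk (tt r r') A B = Some C1.
  rewrite /pk; case: pickP => [C1 _|Hn]; first by exists C1.
  by have := Hn C0; rewrite HC0 HsubC0.
have E : forall t C, G t C r A r' B =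
    if t == tt r r' then (if C == C1 then Tm r A r' B else 0) else 0.
  move=> t C; rewrite /G /sel hA hB Hd /=.
  case: (eqVneq (tt r r') t) => [<-|ne] //=.
  rewrite HC1 /=.
  case: (eqVneq C C1) => [->|neC]; first by rewrite eqxx.
  by case: eqP => // [[E]]; rewrite E eqxx in neC.
have E' : forall t, \sum_(C : {set site L}) G t C r A r' B =
    if t == tt r r' then Tm r A r' B else 0.
  move=> t; under eq_bigr do rewrite E.
  case: (t == tt r r'); last by rewrite big1.
  by rewrite -big_mkcond big_pred1_eq.
under eq_bigr do rewrite E'.
by rewrite sum_nat_pick; last by rewrite /tt; case/andP: hr; case/andP: hr'; lia.
Qed.

Lemma W_sum : \sum_(1 <= t < L.+1) \sum_(C in blocks L t) W t C =
  \sum_(1 <= r < L.+1) \sum_(A : {set site L}) \sum_(1 <= r' < L.+1) \sum_(B : {set site L})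
    (if (A \in blocks L r) && (B \in blocks L r') then Tm r A r' B else 0).
Proof.
have E0 : forall t C, C \notin blocks L t -> W t C = 0.
  move=> t C hC; rewrite /W big1 // => r _; rewrite big1 // => A _.
  rewrite big1 // => r' _; rewrite big1 // => B _.
  rewrite /G /sel; case: (boolP [&& _, _, _, _ & _]) => // /and5P [_ _ _ _ /eqP hpk].
  by have [hC' _] := pk_some _ _ _ _ hpk; rewrite hC' in hC.
have -> : \sum_(1 <= t < L.+1) \sum_(C in blocks L t) W t C =
    \sum_(1 <= t < L.+1) \sum_(C : {set site L}) W t C.
  apply: eq_bigr => t _; rewrite big_mkcond; apply: eq_bigr => C _.
  by case: (boolP (C \in blocks L t)) => // hC; rewrite E0.
rewrite /W pull.
under eq_bigr => r _ do rewrite pull.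
under eq_bigr => r _ do under eq_bigr => A _ do rewrite pull.
under eq_bigr => r _ do under eq_bigr => A _ do under eq_bigr => r' _ do rewrite pull.
apply: eq_big_nat => r hr; apply: eq_bigr => A _; apply: eq_big_nat => r' hr'.
by apply: eq_bigr => B _; apply: sum_G; lia.
Qed.

Lemma comm_expand (S V : op) :
  S = \sum_(1 <= r < L.+1) \sum_(A in blocks L r) SW r A ->
  V = \sum_(1 <= r < L.+1) \sum_(A in blocks L r) VW r A ->
  comm S V = \sum_(1 <= r < L.+1) \sum_(A : {set site L}) \sum_(1 <= r' < L.+1)
    \sum_(B : {set site L})
    (if (A \in blocks L r) && (B \in blocks L r') then Tm r A r' B else 0).
Proof.
move=> hS hV.
pose SA r A := if A \in blocks L r then SW r A else 0.
pose VB r A := if A \in blocks L r then VW r A else 0.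
have hS' : S = \sum_(1 <= r < L.+1) \sum_(A : {set site L}) SA r A.
  by rewrite hS; apply: eq_bigr => r _; rewrite big_mkcond.
have hV' : V = \sum_(1 <= r < L.+1) \sum_(A : {set site L}) VB r A.
  by rewrite hV; apply: eq_bigr => r _; rewrite big_mkcond.
have E1 : opmul S V = \sum_(1 <= r < L.+1) \sum_(A : {set site L}) \sum_(1 <= r' < L.+1)
    \sum_(B : {set site L}) opmul (SA r A) (VB r' B).
  rewrite hS' opmul_suml; apply: eq_bigr => r _; rewrite opmul_suml; apply: eq_bigr => A _.
  by rewrite hV' opmul_sumr; apply: eq_bigr => r' _; rewrite opmul_sumr.
have E2 : opmul V S = \sum_(1 <= r < L.+1) \sum_(A : {set site L}) \sum_(1 <= r' < L.+1)
    \sum_(B : {set site L}) opmul (VB r' B) (SA r A).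
  rewrite hS' opmul_sumr; apply: eq_bigr => r _; rewrite opmul_sumr; apply: eq_bigr => A _.
  by rewrite hV' opmul_suml; apply: eq_bigr => r' _; rewrite opmul_suml.
rewrite /comm E1 E2 -sumrB; apply: eq_bigr => r _; rewrite -sumrB; apply: eq_bigr => A _.
rewrite -sumrB; apply: eq_bigr => r' _; rewrite -sumrB; apply: eq_bigr => B _.
rewrite /SA /VB /Tm /comm; case: (A \in blocks L r); case: (B \in blocks L r') => /=;
  by rewrite ?opmul0l ?opmul0r ?subrr.
Qed.

Lemma Tm_bound r A r' B : (1 <= r)%N -> (1 <= r')%N -> A \in blocks L r -> B \in blocks L r' ->
  opnorm (Tm r A r' B) <= 2 * K * J * (aw R r * aw R r') * expR (- (mu * (r + r')%:R)).
Proof.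
move=> r1 r'1 hA hB.
rewrite /Tm; apply: le_trans (opnorm_comm _ _) _.
have h := ler_pM (opnorm_ge0 _) (opnorm_ge0 _) (Kb _ _ r1 hA) (Jb _ _ r'1 hB).
rewrite [X in _ <= X](_ : _ = 2 * (K * aw R r * expR (- (mu * r%:R)) *
   (J * aw R r' * expR (- (mu * r'%:R))))); last by rewrite natrD mulrDr opprD expRD; ring.
by rewrite ler_wpM2l.
Qed.

Lemma G_bound t C r A r' B : (1 <= r)%N -> (1 <= r')%N ->
  opnorm (G t C r A r' B) <=
  (if (A \in blocks L r) && (A \subset C) then 1 else 0) *
  (if (B \in blocks L r') && (B \subset C) then 1 else 0) *
  (if tt r r' == t then 2 * K * J * expR (- (mu * t%:R)) * (aw R r * aw R r') else 0).
Proof.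
move=> r1 r'1.
rewrite /G /sel; case: (boolP [&& _, _, _, _ & _]) => [/and5P [hA hB htt Hd /eqP hpk] | _].
  have [_ sub] := pk_some _ _ _ _ hpk.
  have sA : A \subset C := fintype.subset_trans (finset.subsetUl A B) sub.
  have sB : B \subset C := fintype.subset_trans (finset.subsetUr A B) sub.
  rewrite hA hB sA sB htt /= !mul1r.
  apply: le_trans (Tm_bound _ _ _ _ r1 r'1 hA hB) _.
  have tle : (t <= r + r')%N by move/eqP: htt => <-; rewrite /tt; lia.
  have e : expR (- (mu * (r + r')%:R)) <= expR (- (mu * t%:R)).
    by rewrite ler_expR lerN2 ler_wpM2l // ler_nat.
  have p : 0 <= 2 * K * J * (aw R r * aw R r').
    by rewrite !mulr_ge0 // aw_ge0.
  by rewrite [X in _ <= X]mulrAC ler_wpM2l.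
rewrite opnorm0; apply: mulr_ge0; first by apply: mulr_ge0; case: ifP.
case: ifP => // _; rewrite !mulr_ge0 ?aw_ge0 ?expR_ge0 //.
Qed.

Lemma W_bound t C : (1 <= t)%N -> C \in blocks L t ->
  opnorm (W t C) * powR (t%:R) 0 * expR (mu * t%:R) <= 128 * K * J.
Proof.
move=> t1 hC.
have tL : (t <= L)%N by move: hC; rewrite /blocks; case: ifP => // _; rewrite inE.
have cardC : (#|C| <= t * t)%N.
  by move: hC; rewrite blocks_mem // => /imsetP [z _ ->]; apply: card_block.
pose fA r (A : {set site L}) : R := if (A \in blocks L r) && (A \subset C) then 1 else 0.
pose M := 2 * K * J * expR (- (mu * t%:R)).
pose h r r' : R := if tt r r' == t then M * (aw R r * aw R r') else 0.
have M0 : 0 <= M by rewrite !mulr_ge0 ?expR_ge0.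
have h0 : forall r r', 0 <= h r r'.
  by move=> r r'; rewrite /h; case: ifP => // _; apply: mulr_ge0 => //; apply: mulr_ge0; apply: aw_ge0.
have fA0 : forall r A, 0 <= fA r A by move=> r A; rewrite /fA; case: ifP.
have step1 : opnorm (W t C) <= \sum_(1 <= r < L.+1) \sum_(A : {set site L})
    \sum_(1 <= r' < L.+1) \sum_(B : {set site L}) fA r A * fA r' B * h r r'.
  rewrite /W; apply: le_trans (opnorm_sum _ _ _) _; apply: ler_sum_nat => r hr.
  apply: le_trans (opnorm_sum _ _ _) _; apply: ler_sum => A _.
  apply: le_trans (opnorm_sum _ _ _) _; apply: ler_sum_nat => r' hr'.
  apply: le_trans (opnorm_sum _ _ _) _; apply: ler_sum => B _.
  by apply: G_bound; lia.
have step2 : \sum_(1 <= r < L.+1) \sum_(A : {set site L})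
    \sum_(1 <= r' < L.+1) \sum_(B : {set site L}) fA r A * fA r' B * h r r' =
    \sum_(1 <= r < L.+1) \sum_(1 <= r' < L.+1)
      h r r' * ((\sum_(A : {set site L}) fA r A) * (\sum_(B : {set site L}) fA r' B)).
  apply: eq_bigr => r _; rewrite exchange_big /=; apply: eq_bigr => r' _.
  rewrite mulr_suml mulr_sumr; apply: eq_bigr => A _.
  rewrite mulr_sumr mulr_sumr; apply: eq_bigr => B _.
  by rewrite mulrC.
have cA : forall r, (1 <= r <= L)%N -> \sum_(A : {set site L}) fA r A <= (t%:R) ^+ 2.
  move=> r /andP [r1 rL].
  rewrite /fA -big_mkcond /= sumr_const -natrX ler_nat.
  have h1 := @card_sub_blocks L r C r1 rL; rewrite cardsE in h1.
  apply: leq_trans h1 _; apply: leq_trans cardC _.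
  by rewrite expnS expn1.
have step3 : \sum_(1 <= r < L.+1) \sum_(1 <= r' < L.+1)
      h r r' * ((\sum_(A : {set site L}) fA r A) * (\sum_(B : {set site L}) fA r' B)) <=
    \sum_(1 <= r < L.+1) \sum_(1 <= r' < L.+1) h r r' * ((t%:R) ^+ 2 * (t%:R) ^+ 2).
  apply: ler_sum_nat => r hr; apply: ler_sum_nat => r' hr'.
  rewrite ler_wpM2l //; apply: ler_pM; rewrite ?sumr_ge0 //; apply: cA; lia.
have step4 : \sum_(1 <= r < L.+1) \sum_(1 <= r' < L.+1) h r r' * ((t%:R) ^+ 2 * (t%:R) ^+ 2) =
    M * ((t%:R : R) ^+ 4 * (\sum_(1 <= r < L.+1) \sum_(1 <= r' < L.+1)
     (if minn (r + r' - 1) L == t then aw R r * aw R r' else 0))).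
  rewrite !mulr_sumr; apply: eq_bigr => r _; rewrite !mulr_sumr; apply: eq_bigr => r' _.
  rewrite /h /tt; case: ifP => _; last by rewrite !mul0r !mulr0.
  by rewrite -exprD; ring.
have num := num_main R L t t1.
rewrite powRr0 mulr1.
have Wb : opnorm (W t C) <= M * 64.
  apply: le_trans step1 _; rewrite step2; apply: le_trans step3 _; rewrite step4.
  by rewrite ler_wpM2l.
apply: le_trans (ler_wpM2r (expR_ge0 _) Wb) _.
have e : expR (- (mu * t%:R)) * expR (mu * t%:R) = 1 by rewrite -expRD addNr expR0.
rewrite le_eqVlt; apply/orP; left; apply/eqP.
rewrite /M; transitivity (128 * K * J * (expR (- (mu * t%:R)) * expR (mu * t%:R))); first by ring.
by rewrite e mulr1.
Qed.

Lemma main_decay (S V : op) :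
  S = \sum_(1 <= r < L.+1) \sum_(A in blocks L r) SW r A ->
  V = \sum_(1 <= r < L.+1) \sum_(A in blocks L r) VW r A ->
  decaying (128 * K * J) mu 0 (comm S V).
Proof.
move=> hS hV; exists W; split; [split|].
- by move=> t C t1 hC; exact: W_supp.
- by rewrite W_sum; exact: comm_expand.
- by move=> t C t1 hC; exact: W_bound.
Qed.

End Main.


Lemma dec_bound (R : realType) (L : nat) (d : site L -> nat) (K mu alpha : R)
  (W : nat -> {set site L} -> Op R d) : 4 <= alpha -> decomp_decaying K mu alpha W ->
  forall r A, (1 <= r)%N -> A \in blocks L r ->
  opnorm (W r A) <= K * aw R r * expR (- (mu * r%:R)).
Proof.
move=> ha H r A r1 hA; have h := H r A r1 hA.
have rge1 : 1 <= (r%:R : R) by rewrite ler1n.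
have p : (r%:R : R) ^+ 4 <= powR r%:R alpha.
  rewrite -powR_mulrn ?ler0n //; apply: ler_powR => //.
have r4 : 0 < (r%:R : R) ^+ 4 by rewrite exprn_gt0 // (lt_le_trans ltr01).
have h2 : opnorm (W r A) * (r%:R ^+ 4 * expR (mu * r%:R)) <= K.
  apply: le_trans h; rewrite mulrA ler_wpM2r ?expR_ge0 // ler_wpM2l ?opnorm_ge0 //.
rewrite /aw expRN -mulrA -invfM ler_pdivlMr ?mulr_gt0 ?expR_gt0 //.
all: by rewrite ltr0n.
Qed.

Lemma dec_K0 (R : realType) (L : nat) (d : site L -> nat) (K mu alpha : R)
  (W : nat -> {set site L} -> Op R d) : (0 < L)%N -> decomp_decaying K mu alpha W -> 0 <= K.
Proof.
move=> L0 H.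
pose x0 : site L := (Ordinal L0, Ordinal L0).
have hA : block 1 x0 \in blocks L 1 by rewrite blocks_mem //; apply/imsetP; exists x0.
apply: le_trans (H 1%N _ (leqnn 1) hA).
by rewrite !mulr_ge0 ?opnorm_ge0 ?powR_ge0 ?expR_ge0.
Qed.

Theorem lemma5 (R : realType) (alpha beta : R) :
  4 <= alpha -> 4 <= beta ->
  exists c : R,
    forall (L : nat) (d : site L -> nat) (K J mu : R) (S V : Op R d),
      (0 < L)%N -> 0 <= mu ->
      decaying K mu alpha S -> decaying J mu beta V ->
      decaying (c * K * J) mu 0 (comm S V).
Proof.
move=> ha hb; exists 128.
move=> L d K J mu S V L0 mu0 [SW [[SWloc hS] SWdec]] [VW [[VWloc hV] VWdec]].
have Kb := dec_bound _ _ _ _ _ _ _ ha SWdec.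
have Jb := dec_bound _ _ _ _ _ _ _ hb VWdec.
have K0 := dec_K0 _ _ _ _ _ _ _ L0 SWdec.
have J0 := dec_K0 _ _ _ _ _ _ _ L0 VWdec.
by apply: main_decay hS hV.
Qed.
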